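(* Assume that every $f_m^j$ ($m\in[M]$, $j\in\{0,\dots,N-1\}$) is $\mu$-strongly convex with $\mu>0$ and $L$-smooth. Run the algorithm RR-CLI described in the context with client step size $0<\gamma\le \frac1L$, server step size $\eta=\gamma N$ and global step size $\theta=\eta R$. Then the iterates satisfy $$\mathbb{E}\big[\|x_T-x_\star\|^2\big]\le (1-\gamma\mu)^{NRT}\|x_0-x_\star\|^2+\frac{2\gamma^2}{\mu}\max_{t,r,m,j}\sigma^2_{m,\mathrm{DS}}(t,r,j),$$ where the maximum is over meta-epochs $t$, rounds $r\in\{0,\dots,R-1\}$, clients $m\in S_t^{\lambda_r}$ and $j\in\{0,\dots,N-1\}$, and $\sigma^2_{m,\mathrm{DS}}(t,r,j)$ is defined in the context.
   Context: Setting. There are $M$ clients, each holding $N$ data points. For $m\in[M]$ and $j\in\{0,\dots,N-1\}$, $f_m^j:\mathbb{R}^d\to\mathbb{R}$ is differentiable. Define $f_m=\frac1N\sum_j f_m^j$ and $f=\frac1M\sum_{m=1}^M f_m$, and let $x_\star$ be a minimizer of $f$. A function $h$ is $L$-smooth if $\|\nabla h(x)-\nabla h(y)\|\le L\|x-y\|$ for all $x,y$. It is $\mu$-strongly convex if $\langle\nabla h(x),y-x\rangle\le-(h(x)-h(y)+\frac\mu2\|x-y\|^2)$ for all $x,y$. The Bregman divergence is $D_h(x,y)=h(x)-h(y)-\langle\nabla h(y),x-y\rangle$. Algorithm RR-CLI. The inputs are a cohort size $C$ with $M=CR$ for an integer $R$, step sizes $\gamma,\eta,\theta>0$, an initial point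 $x_0\in\mathbb{R}^d$, and a number of meta-epochs $T\ge1$. In each meta-epoch $t=0,\dots,T-1$: - The $M$ clients are partitioned uniformly at random into $R$ disjoint cohorts of size $C$, taken in a uniformly random order $S_t^{\lambda_0},\dots,S_t^{\lambda_{R-1}}$. - Each client $m$ uses a uniformly random permutation $\pi_m=(\pi_m^0,\dots,\pi_m^{N-1})$ of its data indices. - All permutations are independent. They are either sampled once before the first meta-epoch and reused, or resampled independently at every meta-epoch; the result holds for either option. - Set $x_t^0=x_t$. For $r=0,\dots,R-1$, each client $m\in S_t^{\lambda_r}$ sets $x^{r,0}_{m,t}=x^r_t$ and computes $x^{r,j+1}_{m,t}=x^{r,j}_{m,t}-\gamma\nabla f_m^{\pi_m^j}(x^{r,j}_{m,t})$ for $j=0,\dots,N-1$, followed by $g^r_{m,t}=\frac{1}{\gamma N}(x^r_t-x^{r,N}_{m,t})$. - The server sets $g^r_t=\frac1C\sum_{m\in S_t^{\lambda_r}}g^r_{m,t}$ and $x^{r+1}_t=x^r_t-\eta g^r_t$. - Finally, $x_{t+1}=x_t-\theta\frac{x_t-x^R_t}{\eta R}$. Expectations are over the random permutations. Star sequence. In meta-epoch $t$, using the same cohorts and permutations as the algorithm, define $x^0_\star=x_\star$. For each $r$ and each $m\in S_t^{\lambda_r}$, set $x^{r,0}_{m,\star}=x^r_\star$, then $x^{r,j+1}_{m,\star}=x^{r,j}_{m,\star}-\gamma\nabla f_m^{\pi_m^j}(x_\star)$, and $x^{r+1}_\star=\frac1C\sum_{m\in S_t^{\lambda_r}}x^{r,N}_{m,\star}$.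 Finally set $\sigma^2_{m,\mathrm{DS}}(t,r,j)=\frac{1}{\gamma^2}\mathbb{E}\big[D_{f_m^{\pi_m^j}}(x^{r,j}_{m,\star},x_\star)\big]$. *)

(* Defs.v *)
From HB Require Import structures.
From mathcomp Require Import all_boot all_order all_algebra all_fingroup.
From mathcomp Require Import all_classical all_reals all_analysis.
Set Implicit Arguments. Unset Strict Implicit. Unset Printing Implicit Defensive.
Import Order.TTheory GRing.Theory Num.Theory.
Import numFieldNormedType.Exports.
Local Open Scope ring_scope.

Section Defs.
Variable R : realType.
Variable d : nat.
Notation vec := 'rV[R]_d.

Definition dot (u v : vec) : R := \sum_(i < d) u 0 i * v 0 i.
Definition sqnorm (u : vec) : R := dot u u.
Definition enorm (u : vec) : R := Num.sqrt (sqnorm u).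

Definition grad (h : vec -> R) (x : vec) : vec :=
  \row_(i < d) ('D_(delta_mx 0 i) h x).

Definition L_smooth (L : R) (h : vec -> R) : Prop :=
  forall x y, enorm (grad h x - grad h y) <= L * enorm (x - y).

Definition strongly_convex (mu : R) (h : vec -> R) : Prop :=
  forall x y, dot (grad h x) (y - x) <= - (h x - h y + mu / 2 * sqnorm (x - y)).

Definition bregman (h : vec -> R) (x y : vec) : R :=
  h x - h y - dot (grad h y) (x - y).

Definition Exp (O : finType) (X : O -> R) : R :=
  (#|O|%:R)^-1 * \sum_(w : O) X w.
Definition CExp (O : finType) (X : O -> R) (A : pred O) : R :=
  (\sum_(w : O | A w) X w) / (#|A|%:R).

Variables (C Rc N : nat).
Notation M := (C * Rc)%N.
Variable f : 'I_M -> 'I_N -> vec -> R.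

Definition favg (x : vec) : R :=
  (M%:R)^-1 * \sum_(m < M) ((N%:R)^-1 * \sum_(j < N) f m j x).

Definition pseq (p : {perm 'I_N}) : seq 'I_N := [seq p i | i <- enum 'I_N].

(* cohort partition in random order, encoded by a permutation rho of clients:
   client m belongs to the cohort of round r iff (rho^-1 m) / C = r. *)
Definition in_cohort (rho : {perm 'I_M}) (r : nat) (m : 'I_M) : bool :=
  ((rho^-1)%g m %/ C == r)%N.

(* data of one meta-epoch: cohort permutation and client data permutations *)
Definition epoch_data := ({perm 'I_M} * {ffun 'I_M -> {perm 'I_N}})%type.

Variables (gamma eta theta : R).

Definition local_run (m : 'I_M) (p : {perm 'I_N}) (j : nat) (x : vec) : vec :=
  foldl (fun y i => y - gamma *: grad (f m i) y) x (take j (pseq p)).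

Definition client_g (m : 'I_M) (p : {perm 'I_N}) (x : vec) : vec :=
  (gamma * N%:R)^-1 *: (x - local_run m p N x).

Definition round_step (ed : epoch_data) (r : nat) (x : vec) : vec :=
  x - eta *: ((C%:R)^-1 *: \sum_(m < M | in_cohort ed.1 r m) client_g m (ed.2 m) x).

Fixpoint rounds (ed : epoch_data) (r : nat) (x : vec) : vec :=
  match r with
  | 0 => x
  | r'.+1 => round_step ed r' (rounds ed r' x)
  end.

Definition epoch_step (ed : epoch_data) (x : vec) : vec :=
  x - theta *: ((eta * Rc%:R)^-1 *: (x - rounds ed Rc x)).

Definition local_star (xs : vec) (m : 'I_M) (p : {perm 'I_N}) (j : nat) (x : vec) : vec :=
  foldl (fun y i => y - gamma *: grad (f m i) xs) x (take j (pseq p)).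

Fixpoint star_rounds (xs : vec) (ed : epoch_data) (r : nat) : vec :=
  match r with
  | 0 => xs
  | r'.+1 => (C%:R)^-1 *:
      \sum_(m < M | in_cohort ed.1 r' m) local_star xs m (ed.2 m) N (star_rounds xs ed r')
  end.

Definition star_breg (xs : vec) (ed : epoch_data) (r : nat) (m : 'I_M) (j : 'I_N) : R :=
  bregman (f m (ed.2 m j)) (local_star xs m (ed.2 m) j (star_rounds xs ed r)) xs.

Variable T : nat.

(* Option 1: cohorts and data permutations resampled at every meta-epoch. *)
Definition Omega_resample := {ffun 'I_T -> epoch_data}.
Definition ed_resample (w : Omega_resample) (t : 'I_T) : epoch_data := w t.
(* Option 2: cohorts resampled each meta-epoch, data permutations sampled once. *)
Definition Omega_once :=
  ({ffun 'I_T -> {perm 'I_M}} * {ffun 'I_M -> {perm 'I_N}})%type.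
Definition ed_once (w : Omega_once) (t : 'I_T) : epoch_data := (w.1 t, w.2).

Definition run (ed : 'I_T -> epoch_data) (x0 : vec) : vec :=
  foldl (fun x t => epoch_step (ed t) x) x0 (enum 'I_T).

Definition sigmaDS (O : finType) (ed : O -> 'I_T -> epoch_data) (xs : vec)
    (t : 'I_T) (r : 'I_Rc) (m : 'I_M) (j : 'I_N) : R :=
  (gamma ^+ 2)^-1 *
    CExp (fun w => star_breg xs (ed w t) r m j) (fun w => in_cohort (ed w t).1 r m).

Definition max_sigma (O : finType) (ed : O -> 'I_T -> epoch_data) (xs : vec) : R :=
  \big[Num.max/0]_(t < T) \big[Num.max/0]_(r < Rc) \big[Num.max/0]_(m < M)
     \big[Num.max/0]_(j < N) sigmaDS ed xs t r m j.

Definition rr_cli_bound (O : finType) (ed : O -> 'I_T -> epoch_data) (mu : R) (x0 xs : vec) : Prop :=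
  Exp (fun w => sqnorm (run (ed w) x0 - xs))
    <= (1 - gamma * mu) ^+ (N * Rc * T) * sqnorm (x0 - xs)
       + 2 * gamma ^+ 2 / mu * max_sigma ed xs.

End Defs.

(* Main.v *)
Require Import Defs.
From HB Require Import structures.
From mathcomp Require Import all_boot all_order all_algebra all_fingroup.
From mathcomp Require Import all_classical all_reals all_analysis.
From mathcomp Require Import ring lra.
Set Implicit Arguments. Unset Strict Implicit. Unset Printing Implicit Defensive.
Import Order.TTheory GRing.Theory Num.Theory.
Import numFieldNormedType.Exports.
Local Open Scope ring_scope.

Section DotLemmas.
Variables (R : realType) (d : nat).
Implicit Types (u v w : 'rV[R]_d).

Lemma dotC u v : dot u v = dot v u.
Proof. by apply: eq_bigr => i _; rewrite mulrC. Qed.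
Lemma dotDl u v w : dot (u + v) w = dot u w + dot v w.
Proof. by rewrite /dot -big_split; apply: eq_bigr => i _; rewrite !mxE mulrDl. Qed.
Lemma dotNl u w : dot (- u) w = - dot u w.
Proof. by rewrite /dot -sumrN; apply: eq_bigr => i _; rewrite !mxE mulNr. Qed.
Lemma dotZl (a : R) u w : dot (a *: u) w = a * dot u w.
Proof. by rewrite /dot mulr_sumr; apply: eq_bigr => i _; rewrite !mxE mulrA. Qed.
Lemma dotBl u v w : dot (u - v) w = dot u w - dot v w.
Proof. by rewrite dotDl dotNl. Qed.
Lemma dotDr u v w : dot w (u + v) = dot w u + dot w v.
Proof. by rewrite dotC dotDl !(dotC w). Qed.
Lemma dotNr u w : dot w (- u) = - dot w u.
Proof. by rewrite dotC dotNl dotC. Qed.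
Lemma dotBr u v w : dot w (u - v) = dot w u - dot w v.
Proof. by rewrite dotDr dotNr. Qed.
Lemma dotZr (a : R) u w : dot w (a *: u) = a * dot w u.
Proof. by rewrite dotC dotZl dotC. Qed.
Lemma dot0l w : dot 0 w = 0.
Proof. by rewrite /dot big1 // => i _; rewrite mxE mul0r. Qed.
Lemma dot_suml (I : Type) (r : seq I) (P : pred I) (F : I -> 'rV[R]_d) w :
  dot (\sum_(i <- r | P i) F i) w = \sum_(i <- r | P i) dot (F i) w.
Proof.
elim: r => [|a r IH]; first by rewrite !big_nil dot0l.
by rewrite !big_cons; case: (P a); rewrite ?dotDl IH.
Qed.
Lemma sqnorm_ge0 u : 0 <= sqnorm u.
Proof. by apply: sumr_ge0 => i _; rewrite -expr2 sqr_ge0. Qed.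
Lemma sqnormB u v : sqnorm (u - v) = sqnorm u - 2 * dot u v + sqnorm v.
Proof. rewrite /sqnorm !dotBl !dotBr (dotC v u); ring. Qed.
Lemma sqnormD u v : sqnorm (u + v) = sqnorm u + 2 * dot u v + sqnorm v.
Proof. rewrite /sqnorm !dotDl !dotDr (dotC v u); ring. Qed.
Lemma sqnormZ (a : R) u : sqnorm (a *: u) = a ^+ 2 * sqnorm u.
Proof. rewrite /sqnorm dotZl dotZr; ring. Qed.
Lemma sqnormN u : sqnorm (- u) = sqnorm u.
Proof. by rewrite /sqnorm dotNl dotNr opprK. Qed.
Lemma sqnorm_eq0 u : sqnorm u = 0 -> u = 0.
Proof.
move=> h; apply/rowP => i; rewrite !mxE.
have H := psumr_eq0P (fun j (_ : true) => (sqr_ge0 (u 0 j) : 0 <= u 0 j * u 0 j)) h.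
by have /eqP := H i isT; rewrite mulf_eq0 orbb => /eqP.
Qed.

Lemma dot_le_amgm u v (s : R) : 0 < s ->
  dot u v <= s / 2 * sqnorm u + s^-1 / 2 * sqnorm v.
Proof.
move=> s0; have := sqnorm_ge0 (s *: u - v).
rewrite sqnormB sqnormZ dotZl => h.
have h2 : 0 <= s^-1 / 2 * (s ^+ 2 * sqnorm u - 2 * (s * dot u v) + sqnorm v).
  by apply: mulr_ge0 => //; rewrite divr_ge0 // invr_ge0 ltW.
have : s^-1 / 2 * (s ^+ 2 * sqnorm u - 2 * (s * dot u v) + sqnorm v)
   = s / 2 * sqnorm u + s^-1 / 2 * sqnorm v - dot u v.
  by field; rewrite gt_eqF.
move=> E; rewrite E in h2; lra.
Qed.

Lemma enorm_sq u : enorm u ^+ 2 = sqnorm u.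
Proof. by rewrite /enorm sqr_sqrtr // sqnorm_ge0. Qed.

Lemma smooth_sq (L : R) (h : 'rV[R]_d -> R) x y : L_smooth L h ->
  sqnorm (grad h x - grad h y) <= L ^+ 2 * sqnorm (x - y).
Proof.
move=> /(_ x y) H; rewrite -!enorm_sq -exprMn.
apply: lerXn2r => //; rewrite ?nnegrE ?sqrtr_ge0 //.
apply: le_trans H; exact: sqrtr_ge0.
Qed.

End DotLemmas.

Section Descent.
Variables (R : realType) (d : nat).
Notation vec := 'rV[R]_d.

Lemma derive_dot (h : vec -> R) z v : differentiable h z ->
  'D_v h z = dot (grad h z) v.
Proof.
move=> dz; rewrite deriveE // {1}(row_sum_delta v) linear_sum /= /dot.
apply: eq_bigr => i _; rewrite linearZ /= mxE -deriveE // mulrC.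
by [].

Qed.


Lemma line_fun_eq (h : vec -> R) (x v : vec) (t : R) :
  (fun s : R => s^-1 *: (((fun r : R => h (r *: v + x)) \o shift t) (s *: 1) - h (t *: v + x)))
  = (fun s : R => s^-1 *: ((h \o shift (t *: v + x)) (s *: v) - h (t *: v + x))).
Proof.
apply/funext => s /=; congr (_ *: (h _ - _)).
by rewrite /shift /= scalerDl addrA [_%:A]mulr1.
Qed.

Lemma line_is_derive (h : vec -> R) (x v : vec) (t : R) :
  (forall z, differentiable h z) ->
  is_derive t 1 (fun r : R => h (r *: v + x)) (dot (grad h (t *: v + x)) v).
Proof.
move=> dh; split.
  rewrite /derivable line_fun_eq; exact: diff_derivable.
by rewrite /derive line_fun_eq -derive_dot.
Qed.


Lemma poly_is_derive (c K r : R) :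
  is_derive r 1 (fun s : R => c * s + K * (s * s)) (c + K * (r + r)).
Proof.
have H : is_derive r 1 ((c \*: (@id R)) + (K \*: ((@id R) * (@id R)))) (c *: 1 + K *: (r *: 1 + r *: 1)).
  apply: is_deriveD; apply: is_deriveZ => //.
have E : (fun s : R => c * s + K * (s * s)) = (c \*: id + K \*: (id * id)) by apply/funext.
rewrite E; move: H; congr is_derive; rewrite /GRing.scale /= !mulr1 //.
Qed.


Lemma descent (h : vec -> R) (L : R) (x y : vec) :
  (forall z, differentiable h z) -> L_smooth L h -> 0 < L ->
  h y - h x - dot (grad h x) (y - x) <= L / 2 * sqnorm (y - x).
Proof.
move=> dh sm L0.
set v := y - x; set c := dot (grad h x) v; set K := L / 2 * sqnorm v.
pose phi := fun r : R => h (r *: v + x).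
pose P := fun s : R => c * s + K * (s * s).
have D (r : R) : is_derive r (1 : R) (phi - P) (dot (grad h (r *: v + x)) v - (c + K * (r + r))).
  apply: is_deriveB; [exact: line_is_derive | exact: poly_is_derive].
have key : {in `[0, 1] &, {homo (phi - P) : a b /~ a <= b}}.
  apply: ler0_derive1_le_cc.
  - by move=> r _; case: (D r).
  - move=> r; rewrite in_itv /= => /andP[r0 _].
    rewrite derive1E derive_val.
    set a := grad h (r *: v + x) - grad h x.
    have ha : sqnorm a <= L ^+ 2 * (r ^+ 2 * sqnorm v).
      rewrite /a -sqnormZ; apply: le_trans (smooth_sq _ _ sm) _.
      by rewrite addrK.
    have s0 : 0 < (L * r)^-1 by rewrite invr_gt0 mulr_gt0.
    have hs := dot_le_amgm a v s0.
    rewrite /a dotBl -/c in hs; rewrite invrK -/a in hs.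
    have : (L * r)^-1 / 2 * sqnorm a <= (L * r)^-1 / 2 * (L ^+ 2 * (r ^+ 2 * sqnorm v)).
      by apply: ler_wpM2l => //; rewrite divr_ge0 // ltW.
    have -> : (L * r)^-1 / 2 * (L ^+ 2 * (r ^+ 2 * sqnorm v)) = L * r / 2 * sqnorm v.
      by field; rewrite !gt_eqF.
    rewrite /K; lra.
  - apply: derivable_within_continuous => r _; by case: (D r).
have : (phi - P) 1 <= (phi - P) 0.
  by apply: key; rewrite ?in_itv /= ?lexx ?ler01.
change (h (1 *: v + x) - (c * 1 + K * (1 * 1)) <= h (0 *: v + x) - (c * 0 + K * (0 * 0)) -> h y - h x - c <= K).
rewrite scale0r add0r scale1r /v subrK !mulr0 !mulr1 addr0 subr0.
lra.
Qed.

End Descent.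

Section OneStep.
Variables (R : realType) (d : nat).
Notation vec := 'rV[R]_d.

Lemma sc_bregman (h : vec -> R) mu x y : strongly_convex mu h ->
  mu / 2 * sqnorm (x - y) <= bregman h y x.
Proof. move=> /(_ x y); rewrite /bregman; lra. Qed.

Lemma cocoercive (h : vec -> R) (L mu : R) (x y : vec) :
  (forall z, differentiable h z) -> L_smooth L h -> 0 < L ->
  strongly_convex mu h -> 0 <= mu ->
  L^-1 / 2 * sqnorm (grad h y - grad h x) <= bregman h y x.
Proof.
move=> dh sm L0 sc mu0.
set gy := grad h y; set gx := grad h x; set g := gy - gx; set s := L^-1.
have s0 : 0 < s by rewrite invr_gt0.
set z := y - s *: g.
have e1 : z - y = - (s *: g) by rewrite /z addrAC subrr add0r.
have e2 : z - x = (y - x) - s *: g by rewrite /z addrAC.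
have H1 := sc_bregman x z sc.
have H1' : 0 <= bregman h z x.
  apply: le_trans H1; apply: mulr_ge0; [exact: divr_ge0 | exact: sqnorm_ge0].
have H2 := descent y z dh sm L0.
rewrite /bregman e2 dotBr dotZr -/gx in H1'.
rewrite e1 dotNr dotZr sqnormN sqnormZ -/gy in H2.
have e3 : sqnorm g = dot gy g - dot gx g by rewrite /sqnorm {1}/g dotBl.
have e4 : L / 2 * (s ^+ 2 * sqnorm g) = s / 2 * sqnorm g.
  by rewrite /s; field; rewrite gt_eqF.
have e5 : s * sqnorm g = s * dot gy g - s * dot gx g by rewrite e3; ring.
rewrite e4 in H2; rewrite /bregman -/gx; lra.
Qed.

Lemma one_step (h : vec -> R) (L mu gamma : R) (y z xs : vec) :
  (forall w, differentiable h w) -> L_smooth L h -> 0 < L ->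
  strongly_convex mu h -> 0 < mu -> 0 < gamma -> gamma <= L^-1 ->
  sqnorm ((y - gamma *: grad h y) - (z - gamma *: grad h xs))
    <= (1 - gamma * mu) * sqnorm (y - z) + 2 * gamma * bregman h z xs.
Proof.
move=> dh sm L0 sc mu0 g0 gL.
set u := y - z; set w := grad h y - grad h xs.
have -> : (y - gamma *: grad h y) - (z - gamma *: grad h xs) = u - gamma *: w.
  by apply/rowP => i; rewrite /u /w !mxE; ring.
rewrite sqnormB sqnormZ dotZr.
have tp : dot u w = bregman h z y + bregman h y xs - bregman h z xs.
  rewrite /bregman /u /w !dotBr !dotBl (dotC (grad h y) y) (dotC (grad h y) z)
    (dotC (grad h xs) y) (dotC (grad h xs) z) (dotC (grad h xs) xs); ring.
have h1 := sc_bregman y z sc.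
have h2 := cocoercive xs y dh sm L0 sc (ltW mu0).
have W0 := sqnorm_ge0 w.
have h1' : gamma * (mu / 2 * sqnorm u) <= gamma * bregman h z y by apply: ler_wpM2l; [exact: ltW|].
have h2' : gamma * (L^-1 / 2 * sqnorm w) <= gamma * bregman h y xs by apply: ler_wpM2l; [exact: ltW|].
have h3 : gamma ^+ 2 * sqnorm w <= gamma * L^-1 * sqnorm w.
  apply: ler_wpM2r => //; rewrite expr2; apply: ler_wpM2l => //; exact: ltW.
rewrite tp; lra.
Qed.

End OneStep.

Section Comb.

Lemma count_div (C n r : nat) : (0 < C)%N ->
  (\sum_(0 <= k < C * n | (k %/ C == r)%N) 1 = if (r < n)%N then C else 0)%N.
Proof.
move=> C0; elim: n => [|n IH]; first by rewrite muln0 big_geq.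
rewrite mulnS addnC (big_cat_nat _ (leq_addr C _)) //= IH.
have -> : (\sum_(C * n <= k < C * n + C | (k %/ C == r)%N) 1 = if r == n then C else 0)%N.
  rewrite (big_addn 0 _ (C * n)) addKn.
  rewrite big_nat_cond (eq_bigl (fun i => (0 <= i < C)%N && (r == n))); last first.
    move=> i; case/boolP: (0 <= i < C)%N => //= iC.
    by rewrite addnC mulnC divnMDl // divn_small // addn0 eq_sym.
  case: (r == n); last by rewrite big1 // => i; rewrite andbF.
  rewrite (eq_bigl (fun i => (0 <= i < C)%N && xpredT i)) => [|i]; last by rewrite andbT.
  by rewrite -big_nat_cond big_mkord sum1_card card_ord.
case: (ltngtP r n) => [rn|nr|->]; first by rewrite ltnS (ltnW rn) addn0.
  by rewrite ltnS leqNgt nr.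
by rewrite ltnSn.
Qed.



Lemma cohort_card (C Rc : nat) (rho : {perm 'I_(C * Rc)}) (r : nat) :
  (0 < C)%N -> (r < Rc)%N -> (\sum_(m | in_cohort rho r m) 1 = C)%N.
Proof.
move=> C0 rR; rewrite (reindex_inj (@perm_inj _ rho)) /in_cohort /=.
rewrite (eq_bigl (fun k : 'I_(C * Rc) => (k %/ C == r)%N)); last by move=> k; rewrite permK.
by rewrite -(big_mkord (fun k => (k %/ C == r)%N) (fun _ => 1%N)) count_div // rR.
Qed.

Lemma cohort_cardR (R : realType) (C Rc : nat) (rho : {perm 'I_(C * Rc)}) (r : nat) :
  (0 < C)%N -> (r < Rc)%N -> \sum_(m | in_cohort rho r m) (1 : R) = C%:R.
Proof.
move=> C0 rR; rewrite -[in RHS](cohort_card rho C0 rR) natr_sum //.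
Qed.

Lemma cohort_lt (C Rc : nat) (rho : {perm 'I_(C * Rc)}) (m : 'I_(C * Rc)) :
  (0 < C)%N -> ((rho^-1)%g m %/ C < Rc)%N.
Proof. by move=> C0; rewrite ltn_divLR // [X in (_ < X)%N]mulnC. Qed.

Lemma cohort_partition (V : nmodType) (C Rc : nat) (rho : {perm 'I_(C * Rc)})
  (F : 'I_(C * Rc) -> V) : (0 < C)%N ->
  \sum_(r < Rc) \sum_(m | in_cohort rho r m) F m = \sum_m F m.
Proof.
move=> C0; rewrite (exchange_big_dep xpredT) //=; apply: eq_bigr => m _.
by rewrite (big_pred1 (Ordinal (cohort_lt rho m C0))) // => r; rewrite /in_cohort eq_sym.
Qed.

End Comb.

Section Algo.
Variables (R : realType) (d C Rc N : nat).
Notation vec := 'rV[R]_d.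
Notation M := (C * Rc)%N.
Variable f : 'I_M -> 'I_N -> vec -> R.
Variable gamma : R.

Lemma size_pseq (p : {perm 'I_N}) : size (pseq p) = N.
Proof. by rewrite /pseq size_map size_enum_ord. Qed.

Lemma nth_pseq (p : {perm 'I_N}) (j : 'I_N) x0 : nth x0 (pseq p) j = p j.
Proof.
rewrite /pseq (nth_map j) ?size_enum_ord //; congr (p _).
by apply: val_inj; rewrite /= nth_enum_ord.
Qed.

Lemma local_run_S m p (j : 'I_N) x :
  local_run f gamma m p j.+1 x =
  local_run f gamma m p j x - gamma *: grad (f m (p j)) (local_run f gamma m p j x).
Proof.
by rewrite /local_run (take_nth j) ?size_pseq // foldl_rcons nth_pseq.
Qed.

Lemma local_star_S xs m p (j : 'I_N) x :
  local_star f gamma xs m p j.+1 x =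
  local_star f gamma xs m p j x - gamma *: grad (f m (p j)) xs.
Proof.
by rewrite /local_star (take_nth j) ?size_pseq // foldl_rcons nth_pseq.
Qed.

Lemma local_run0 m p x : local_run f gamma m p 0 x = x.
Proof. by rewrite /local_run take0. Qed.
Lemma local_star0 xs m p x : local_star f gamma xs m p 0 x = x.
Proof. by rewrite /local_star take0. Qed.

Lemma foldl_const_grad (G : 'I_N -> vec) (s : seq 'I_N) x :
  foldl (fun y i => y - gamma *: G i) x s = x - gamma *: \sum_(i <- s) G i.
Proof.
elim: s x => [|a s IH] x /=; first by rewrite big_nil scaler0 subr0.
by rewrite IH big_cons scalerDr opprD addrA.
Qed.

Lemma local_star_N xs m p x :
  local_star f gamma xs m p N x = x - gamma *: \sum_(i < N) grad (f m i) xs.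
Proof.
rewrite /local_star take_oversize ?size_pseq // foldl_const_grad.
congr (_ - gamma *: _); rewrite /pseq big_map big_enum /=.
by rewrite [RHS](reindex_inj (@perm_inj _ p)).
Qed.


Hypothesis C0 : (0 < C)%N.

Lemma sum_cohort_const (rho : {perm 'I_M}) (r : nat) (y : vec) : (r < Rc)%N ->
  \sum_(m | in_cohort rho r m) y = C%:R *: y.
Proof.
move=> rR; rewrite -(cohort_cardR R rho C0 rR) scaler_suml.
by apply: eq_bigr => m _; rewrite scale1r.
Qed.

Lemma CinvC : (C%:R)^-1 * C%:R = 1 :> R.
Proof. by rewrite mulVf // pnatr_eq0 -lt0n. Qed.

Lemma rounds_S (ed : epoch_data C Rc N) (r : nat) x : (r < Rc)%N -> 0 < gamma -> (0 < N)%N ->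
  rounds f gamma (gamma * N%:R) ed r.+1 x =
  (C%:R)^-1 *: \sum_(m | in_cohort ed.1 r m) local_run f gamma m (ed.2 m) N (rounds f gamma (gamma * N%:R) ed r x).
Proof.
move=> rR g0 N0 /=; set y := rounds _ _ _ _ _ _.
rewrite /round_step /client_g -scaler_sumr scalerA scalerA.
have -> : gamma * N%:R / C%:R / (gamma * N%:R) = (C%:R)^-1.
  by field; rewrite !pnatr_eq0 -!lt0n C0 N0 gt_eqF.
rewrite sumrB sum_cohort_const // scalerBr scalerA CinvC scale1r opprB addrC subrK //.
Qed.

Lemma star_rounds_S xs (ed : epoch_data C Rc N) (r : nat) : (r < Rc)%N ->
  star_rounds f gamma xs ed r.+1 = star_rounds f gamma xs ed r
     - (gamma / C%:R) *: \sum_(m | in_cohort ed.1 r m) \sum_(i < N) grad (f m i) xs.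
Proof.
move=> rR; rewrite [LHS]/=.
rewrite (eq_bigr (fun m => star_rounds f gamma xs ed r - gamma *: \sum_(i < N) grad (f m i) xs)); last first.
  by move=> m _; rewrite local_star_N.
rewrite sumrB sum_cohort_const // scalerBr scalerA CinvC scale1r -scaler_sumr scalerA mulrC //.
Qed.

Lemma star_rounds_Rc xs (ed : epoch_data C Rc N) :
  \sum_(m < M) \sum_(i < N) grad (f m i) xs = 0 ->
  star_rounds f gamma xs ed Rc = xs.
Proof.
move=> G0.
have H r : (r <= Rc)%N -> star_rounds f gamma xs ed r = xs - (gamma / C%:R) *:
   \sum_(0 <= r' < r) \sum_(m | in_cohort ed.1 r' m) \sum_(i < N) grad (f m i) xs.
  elim: r => [|r IH] rR.
    rewrite big_geq // scaler0 subr0. reflexivity.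
  rewrite (star_rounds_S _ _ rR) (IH (ltnW rR)) (big_nat_recr _ _ _ (leq0n r)) scalerDr opprD addrA.
  reflexivity.
rewrite (H Rc (leqnn Rc)) big_mkord (cohort_partition _ _ C0) G0 scaler0 subr0.
reflexivity.
Qed.

Lemma epoch_step_eq (ed : epoch_data C Rc N) x : 0 < gamma -> (0 < N)%N -> (0 < Rc)%N ->
  epoch_step f gamma (gamma * N%:R) (gamma * N%:R * Rc%:R) ed x = rounds f gamma (gamma * N%:R) ed Rc x.
Proof.
move=> g0 N0 R0.
have nz : gamma * N%:R * Rc%:R != 0.
  by rewrite !mulf_neq0 ?gt_eqF ?ltr0n.
rewrite /epoch_step scalerA (mulfV nz) scale1r opprB addrC subrK.
reflexivity.
Qed.

End Algo.

Section GradZero.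
Variables (R : realType) (d C Rc N : nat).
Notation vec := 'rV[R]_d.
Notation M := (C * Rc)%N.
Variable f : 'I_M -> 'I_N -> vec -> R.

Lemma grad_sum_zero (L : R) (xs : vec) :
  (0 < C)%N -> (0 < Rc)%N -> (0 < N)%N ->
  (forall m j x, differentiable (f m j) x) ->
  (forall m j, L_smooth L (f m j)) -> 0 < L ->
  (forall x, favg f xs <= favg f x) ->
  \sum_(m < M) \sum_(i < N) grad (f m i) xs = 0.
Proof.
move=> C0 R0 N0 dh sm L0 fmin.
set g := \sum_(m < M) \sum_(i < N) grad (f m i) xs.
pose SS x := \sum_(m < M) \sum_(i < N) f m i x.
have MN0 : 0 < (M * N)%:R :> R by rewrite ltr0n !muln_gt0 C0 R0 N0.
set s := (L * (M * N)%:R)^-1.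
have s0 : 0 < s by rewrite invr_gt0 mulr_gt0.
set y := xs - s *: g.
have favgE x : favg f x = ((M * N)%:R)^-1 * SS x.
  rewrite /favg /SS mulr_sumr [RHS]mulr_sumr; apply: eq_bigr => m _.
  by rewrite mulrA -invfM -natrM.
have Hmin : SS xs <= SS y.
  have := fmin y; rewrite !favgE => H.
  have P : 0 < ((M * N)%:R : R)^-1 by rewrite invr_gt0.
  by rewrite -(ler_pM2l P).
have Hd : SS y - SS xs - dot g (y - xs) <= (M * N)%:R * (L / 2 * sqnorm (y - xs)).
  have -> : SS y - SS xs - dot g (y - xs) =
     \sum_(m < M) \sum_(i < N) (f m i y - f m i xs - dot (grad (f m i) xs) (y - xs)).
    rewrite /SS /g dot_suml.
    under [X in _ - _ - X]eq_bigr do rewrite dot_suml.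
    rewrite -!sumrB; apply: eq_bigr => m _; rewrite -!sumrB; reflexivity.
  have -> : (M * N)%:R * (L / 2 * sqnorm (y - xs)) =
     \sum_(m < M) \sum_(i < N) (L / 2 * sqnorm (y - xs)).
    by rewrite !sumr_const !card_ord -mulrnA mulr_natl mulnC.
  apply: ler_sum => m _; apply: ler_sum => i _; exact: descent.
have e1 : y - xs = - (s *: g) by rewrite /y addrAC subrr add0r.
rewrite e1 dotNr dotZr sqnormN sqnormZ in Hd.
have e2 : (M * N)%:R * (L / 2 * (s ^+ 2 * sqnorm g)) = s / 2 * sqnorm g.
  by rewrite /s; field; rewrite !pnatr_eq0 -!lt0n N0 R0 C0 gt_eqF.
rewrite e2 in Hd.
have G0 : sqnorm g = 0.
  apply/eqP; rewrite eq_le sqnorm_ge0 andbT.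
  have : s / 2 * sqnorm g <= 0 by rewrite /sqnorm in Hd *; lra.
  by rewrite pmulr_rle0 // divr_gt0.
exact: sqnorm_eq0.
Qed.
End GradZero.

Section Helpers.
Variable R : realType.

Lemma jensen (d : nat) (I : finType) (P : pred I) (v : I -> 'rV[R]_d) (C : R) :
  0 < C -> \sum_(i | P i) (1 : R) = C ->
  sqnorm (C^-1 *: \sum_(i | P i) v i) <= C^-1 * \sum_(i | P i) sqnorm (v i).
Proof.
move=> C0 HC; set a := C^-1 *: \sum_(i | P i) v i.
have Sa : \sum_(i | P i) v i = C *: a by rewrite /a scalerA mulfV ?scale1r ?gt_eqF.
have H : 0 <= \sum_(i | P i) sqnorm (v i - a) by apply: sumr_ge0 => i _; exact: sqnorm_ge0.
have E : \sum_(i | P i) sqnorm (v i - a) =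
   \sum_(i | P i) sqnorm (v i) - 2 * dot (\sum_(i | P i) v i) a + C * sqnorm a.
  under eq_bigr do rewrite sqnormB.
  rewrite big_split /= sumrB dot_suml mulr_sumr -HC mulr_suml.
  by congr (_ - _ + _); apply: eq_bigr => i _; rewrite mul1r.
rewrite E Sa dotZl in H.
rewrite -(ler_pM2l C0) mulrA mulfV ?gt_eqF // mul1r.
rewrite /sqnorm in H *; lra.
Qed.

Lemma bigmax_ge_seq (I : eqType) (s : seq I) (F : I -> R) i :
  i \in s -> F i <= \big[Num.max/0]_(k <- s) F k.
Proof.
elim: s => // a s IH; rewrite inE big_cons => /orP [/eqP -> | /IH H].
  by rewrite le_max lexx.
by rewrite le_max H orbT.
Qed.

Lemma bigmax_ge (I : finType) (F : I -> R) i : F i <= \big[Num.max/0]_(k : I) F k.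
Proof. by apply: bigmax_ge_seq; rewrite mem_index_enum. Qed.

Lemma bigmax_ge0 (I : finType) (F : I -> R) : 0 <= \big[Num.max/0]_(k : I) F k.
Proof.
elim: (index_enum I) => [|a s IH]; first by rewrite big_nil.
by rewrite big_cons le_max IH orbT.
Qed.

Variable O : finType.

Lemma Exp_le (X Y : O -> R) : (forall w, X w <= Y w) -> Exp X <= Exp Y.
Proof.
move=> H; rewrite /Exp; apply: ler_wpM2l; first by rewrite invr_ge0 ler0n.
by apply: ler_sum => w _.
Qed.

Lemma Exp_lin (a b : R) (X Y : O -> R) :
  Exp (fun w => a * X w + b * Y w) = a * Exp X + b * Exp Y.
Proof.
rewrite /Exp big_split /= -!mulr_sumr; ring.
Qed.

Lemma Exp_const_le (a : R) : 0 <= a -> Exp (fun _ : O => a) <= a.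
Proof.
move=> a0; rewrite /Exp sumr_const.
rewrite -[a *+ _]mulr_natl mulrA.
have [->|n0] := eqVneq (#|O|%:R : R) 0; first by rewrite invr0 !mul0r.
by rewrite mulVf // mul1r.
Qed.

Lemma sum_CExp (X : O -> R) (A : pred O) :
  \sum_(w | A w) X w = #|A|%:R * CExp X A.
Proof.
rewrite /CExp.
have [n0|n0] := eqVneq (#|A|%:R : R) 0.
  rewrite n0 mul0r; apply: big_pred0 => w.
  apply/negbTE/negP => Aw; move/eqP: n0; rewrite pnatr_eq0 => /eqP/card0_eq/(_ w).
  by rewrite !inE; move=> /negP; apply.
by rewrite mulrC -mulrA mulVf // mulr1.
Qed.

End Helpers.

Section Main.
Variables (R : realType) (d C Rc N T : nat).
Notation vec := 'rV[R]_d.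
Notation M := (C * Rc)%N.
Variable f : 'I_M -> 'I_N -> vec -> R.
Variables (L mu gamma : R) (x0 xs : vec).
Variable O : finType.
Variable ed : O -> 'I_T -> epoch_data C Rc N.
Hypotheses (C0 : (0 < C)%N) (R0 : (0 < Rc)%N) (N0 : (0 < N)%N).
Hypothesis dh : forall m j x, differentiable (f m j) x.
Hypothesis mu0 : 0 < mu.
Hypothesis sc : forall m j, strongly_convex mu (f m j).
Hypothesis sm : forall m j, L_smooth L (f m j).
Hypothesis L0 : 0 < L.
Hypothesis g0 : 0 < gamma.
Hypothesis gL : gamma <= L^-1.
Hypothesis G0 : \sum_(m < M) \sum_(i < N) grad (f m i) xs = 0.
Hypothesis q0 : 0 <= 1 - gamma * mu.

Notation eta := (gamma * N%:R).
Notation theta := (gamma * N%:R * Rc%:R).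
Let q := 1 - gamma * mu.
Let sig := max_sigma f gamma ed xs.
Let c := 2 * gamma ^+ 2 / mu * sig.
Let a0 := sqnorm (x0 - xs).

Definition Inv (n : nat) (X : O -> R) := Exp X <= q ^+ n * a0 + c.

Lemma sig_ge0 : 0 <= sig.
Proof. exact: bigmax_ge0. Qed.

Lemma c_ge0 : 0 <= c.
Proof.
apply: mulr_ge0 (sig_ge0); apply: divr_ge0 (ltW mu0).
by apply: mulr_ge0 => //; apply: sqr_ge0.
Qed.

Lemma Inv_mono n (X Y : O -> R) : Inv n X -> (forall w, Y w <= X w) -> Inv n Y.
Proof. by move=> H HY; apply: le_trans H; exact: Exp_le. Qed.

Lemma Inv_step n (X Y b : O -> R) : Inv n X ->
  (forall w, Y w <= q * X w + 2 * gamma * b w) ->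
  Exp b <= gamma ^+ 2 * sig -> Inv n.+1 Y.
Proof.
move=> HX HY Hb; rewrite /Inv.
apply: le_trans (Exp_le HY) _; rewrite Exp_lin.
have h1 : q * Exp X <= q * (q ^+ n * a0 + c) by apply: ler_wpM2l.
have h2 : 2 * gamma * Exp b <= 2 * gamma * (gamma ^+ 2 * sig).
  by apply: ler_wpM2l => //; apply: mulr_ge0 => //; exact: ltW.
have e : q * (q ^+ n * a0 + c) + 2 * gamma * (gamma ^+ 2 * sig) = q ^+ n.+1 * a0 + c.
  rewrite [q ^+ n.+1]exprS; move: (q ^+ n) => Q; rewrite /q /c; field; rewrite gt_eqF //.
lra.
Qed.


Lemma sigmaDS_le (t : 'I_T) (r : 'I_Rc) (m : 'I_M) (j : 'I_N) :
  sigmaDS f gamma ed xs t r m j <= sig.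
Proof.
rewrite /sig /max_sigma.
apply: le_trans (bigmax_ge _ t).
apply: le_trans (bigmax_ge _ r).
apply: le_trans (bigmax_ge _ m).
exact: (bigmax_ge _ j).
Qed.

Lemma Exp_B (t : 'I_T) (r : 'I_Rc) (j : 'I_N) :
  Exp (fun w => (C%:R)^-1 * \sum_(m | in_cohort (ed w t).1 r m) star_breg f gamma xs (ed w t) r m j)
    <= gamma ^+ 2 * sig.
Proof.
set D := fun w m => star_breg f gamma xs (ed w t) r m j.
set P := fun w m => in_cohort (ed w t).1 r m.
have exch : forall F : O -> 'I_M -> R,
    \sum_w \sum_(m | P w m) F w m = \sum_m \sum_(w | P w m) F w m.
  move=> F; rewrite (eq_bigr (fun w => \sum_m (if P w m then F w m else 0))); last first.
    by move=> w _; rewrite big_mkcond.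
  rewrite exchange_big; apply: eq_bigr => m _; rewrite [RHS]big_mkcond //.
rewrite /Exp -mulr_sumr exch.
have step1 : \sum_(m < M) \sum_(w | P w m) D w m
    <= \sum_(m < M) \sum_(w | P w m) (gamma ^+ 2 * sig).
  apply: ler_sum => m _.
  rewrite (sum_CExp (fun w => D w m)) sumr_const -[gamma ^+ 2 * sig *+ _]mulr_natl.
  apply: ler_wpM2l; first exact: ler0n.
  have -> : CExp (D^~ m) (P^~ m) = gamma ^+ 2 * sigmaDS f gamma ed xs t r m j.
    by rewrite /sigmaDS mulrA mulfV ?mul1r // expf_neq0 // gt_eqF.
  apply: ler_wpM2l; [exact: sqr_ge0 | exact: sigmaDS_le].
have step2 : \sum_w \sum_(m | P w m) (gamma ^+ 2 * sig) = #|O|%:R * (C%:R * (gamma ^+ 2 * sig)).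
  rewrite (eq_bigr (fun _ => C%:R * (gamma ^+ 2 * sig))); last first.
    move=> w _; rewrite -(cohort_cardR R (ed w t).1 C0 (ltn_ord r)) mulr_suml.
    by apply: eq_bigr => m _; rewrite mul1r.
  by rewrite sumr_const -[_ *+ #|_|]mulr_natl.
rewrite -(exch (fun _ _ => gamma ^+ 2 * sig)) step2 in step1.
have gs0 : 0 <= gamma ^+ 2 * sig by apply: mulr_ge0; [exact: sqr_ge0 | exact: sig_ge0].
have [On|On] := eqVneq (#|O|%:R : R) 0; first by rewrite On invr0 mul0r.
have Ci : 0 <= (C%:R : R)^-1 by rewrite invr_ge0 ler0n.
have Oi : 0 <= (#|O|%:R : R)^-1 by rewrite invr_ge0 ler0n.
apply: le_trans (ler_wpM2l Oi (ler_wpM2l Ci step1)) _.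
rewrite mulrA mulrA mulrC mulrA mulrA.
rewrite le_eqVlt; apply/orP; left; apply/eqP.
field; rewrite On pnatr_eq0 -lt0n C0 //.
Qed.


Definition xt (w : O) (t : nat) : vec :=
  foldl (fun x t => epoch_step f gamma eta theta (ed w t) x) x0 (take t (enum 'I_T)).
Definition xr (w : O) (t : 'I_T) (r : nat) : vec := rounds f gamma eta (ed w t) r (xt w t).
Definition sr (w : O) (t : 'I_T) (r : nat) : vec := star_rounds f gamma xs (ed w t) r.
Definition Phi (w : O) (t : 'I_T) (r : nat) (j : nat) : R :=
  (C%:R)^-1 * \sum_(m | in_cohort (ed w t).1 r m)
     sqnorm (local_run f gamma m ((ed w t).2 m) j (xr w t r)
             - local_star f gamma xs m ((ed w t).2 m) j (sr w t r)).

Lemma sumrD_ (I : finType) (P : pred I) (F G : I -> R) :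
  \sum_(i | P i) (F i + G i) = \sum_(i | P i) F i + \sum_(i | P i) G i.
Proof. by rewrite big_split. Qed.

Lemma inner (t : 'I_T) (r : 'I_Rc) n : Inv n (fun w => Phi w t r 0) ->
  forall j, (j <= N)%N -> Inv (n + j) (fun w => Phi w t r j).
Proof.
move=> H0; elim=> [|j IH] jN; first by rewrite addn0.
rewrite addnS; apply: (Inv_step (IH (ltnW jN))) (Exp_B t r (Ordinal jN)).
move=> w; rewrite /Phi.
set S := in_cohort (ed w t).1 r.
have Ci : 0 <= (C%:R : R)^-1 by rewrite invr_ge0 ler0n.
have E : q * ((C%:R)^-1 * \sum_(m | S m) sqnorm (local_run f gamma m ((ed w t).2 m) j (xr w t r)
             - local_star f gamma xs m ((ed w t).2 m) j (sr w t r)))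
   + 2 * gamma * ((C%:R)^-1 * \sum_(m | S m) star_breg f gamma xs (ed w t) r m (Ordinal jN))
   = (C%:R)^-1 * \sum_(m | S m) (q * sqnorm (local_run f gamma m ((ed w t).2 m) j (xr w t r)
             - local_star f gamma xs m ((ed w t).2 m) j (sr w t r))
        + 2 * gamma * star_breg f gamma xs (ed w t) r m (Ordinal jN)).
  rewrite (sumrD_ S (fun m => q * sqnorm (local_run f gamma m ((ed w t).2 m) j (xr w t r)
             - local_star f gamma xs m ((ed w t).2 m) j (sr w t r)))
        (fun m => 2 * gamma * star_breg f gamma xs (ed w t) r m (Ordinal jN))).
  rewrite -!mulr_sumr; ring.
rewrite E; apply: ler_wpM2l => //; apply: ler_sum => m _.
rewrite (local_run_S f gamma m _ (Ordinal jN)) (local_star_S f gamma xs m _ (Ordinal jN)).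
apply: (one_step _ _ _ (dh _ _) (sm _ _) L0 (sc _ _) mu0 g0 gL).
Qed.


Lemma sum_cohort_constR (rho : {perm 'I_M}) (r : nat) (x : R) : (r < Rc)%N ->
  \sum_(m | in_cohort rho r m) x = C%:R * x.
Proof.
move=> rR; rewrite -(cohort_cardR R rho C0 rR) mulr_suml.
by apply: eq_bigr => m _; rewrite mul1r.
Qed.

Lemma round (t : 'I_T) (r : 'I_Rc) n :
  Inv n (fun w => sqnorm (xr w t r - sr w t r)) ->
  Inv (n + N) (fun w => sqnorm (xr w t r.+1 - sr w t r.+1)).
Proof.
move=> H.
have H0 : Inv n (fun w => Phi w t r 0).
  apply: (Inv_mono H) => w; rewrite /Phi.
  rewrite (eq_bigr (fun _ => sqnorm (xr w t r - sr w t r))); last first.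
    by move=> m _; rewrite local_run0 local_star0.
  rewrite sum_cohort_constR ?ltn_ord // mulrA mulVf ?mul1r //.
  by rewrite pnatr_eq0 -lt0n.
have HN := inner H0 (leqnn N).
apply: (Inv_mono HN) => w.
have e1 : xr w t r.+1 = (C%:R)^-1 *: \sum_(m | in_cohort (ed w t).1 r m)
    local_run f gamma m ((ed w t).2 m) N (xr w t r).
  by rewrite /xr (rounds_S _ _ _ _ (ltn_ord r) g0 N0).
have e2 : sr w t r.+1 = (C%:R)^-1 *: \sum_(m | in_cohort (ed w t).1 r m)
    local_star f gamma xs m ((ed w t).2 m) N (sr w t r).
  reflexivity.
rewrite e1 e2 -scalerBr -sumrB /Phi.
apply: jensen; first by rewrite ltr0n.
exact: cohort_cardR.
Qed.

Lemma rounds_all (t : 'I_T) n : Inv n (fun w => sqnorm (xt w t - xs)) ->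
  forall r, (r <= Rc)%N -> Inv (n + r * N) (fun w => sqnorm (xr w t r - sr w t r)).
Proof.
move=> H; elim=> [|r IH] rR; first by rewrite mul0n addn0.
have := @round t (Ordinal rR) _ (IH (ltnW rR)).
by rewrite mulSn [(N + _)%N]addnC addnA.
Qed.


Lemma xt_S w t (tT : (t < T)%N) :
  xt w t.+1 = epoch_step f gamma eta theta (ed w (Ordinal tT)) (xt w t).
Proof.
rewrite /xt (take_nth (Ordinal tT)) ?size_enum_ord // foldl_rcons.
congr (epoch_step _ _ _ _ (ed w _) _).
by apply: val_inj; rewrite /= nth_enum_ord.
Qed.

Lemma epoch t (tT : (t < T)%N) n : Inv n (fun w => sqnorm (xt w t - xs)) ->
  Inv (n + Rc * N) (fun w => sqnorm (xt w t.+1 - xs)).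
Proof.
move=> H; have := @rounds_all (Ordinal tT) n H Rc (leqnn Rc).
move=> H2; apply: (Inv_mono H2) => w.
rewrite (xt_S w tT) (epoch_step_eq f _ _ g0 N0 R0).
rewrite /sr (star_rounds_Rc gamma C0 _ G0).
exact: lexx.
Qed.

Lemma epochs t : (t <= T)%N -> Inv (t * (Rc * N)) (fun w => sqnorm (xt w t - xs)).
Proof.
elim: t => [|t IH] tT.
  rewrite /Inv mul0n expr0 mul1r.
  have -> : (fun w => sqnorm (xt w 0 - xs)) = (fun _ => sqnorm (x0 - xs)).
    by apply/funext => w; rewrite /xt take0.
  apply: le_trans (Exp_const_le O (sqnorm_ge0 (x0 - xs))) _.
  by rewrite /a0 lerDl c_ge0.
have := epoch tT (IH (ltnW tT)).
by rewrite mulSn addnC.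
Qed.

Lemma final_bound : rr_cli_bound f gamma eta theta ed mu x0 xs.
Proof.
have := epochs (leqnn T); rewrite /Inv /rr_cli_bound.
have -> : (T * (Rc * N) = N * Rc * T)%N by rewrite [RHS]mulnC [(N * Rc)%N]mulnC.
have E w : xt w T = run f gamma eta theta (ed w) x0.
  by rewrite /xt take_oversize ?size_enum_ord.
have -> : (fun w => sqnorm (xt w T - xs)) = (fun w => sqnorm (run f gamma eta theta (ed w) x0 - xs)).
  by apply/funext => w; rewrite E.
by [].
Qed.

End Main.

Lemma mu_le_L (R : realType) (d : nat) (h : 'rV[R]_d -> R) (L mu : R) :
  (0 < d)%N -> 0 < L -> strongly_convex mu h -> L_smooth L h -> mu <= L.
Proof.
move=> d0 L0 sc sm.
set x : 'rV[R]_d := 0; set y : 'rV[R]_d := delta_mx 0 (Ordinal d0).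
have V0 : 0 < sqnorm (y - x).
  rewrite lt_def sqnorm_ge0 andbT; apply/eqP => /sqnorm_eq0 /rowP /(_ (Ordinal d0)).
  by rewrite /x /y subr0 !mxE !eqxx /= => /eqP; rewrite oner_eq0.
have h1 := sc x y; have h2 := sc y x.
have e : dot (grad h y - grad h x) (y - x) = - (dot (grad h x) (y - x) + dot (grad h y) (x - y)).
  have xy : x - y = - (y - x) by rewrite opprB.
  by rewrite xy dotNr dotBl; ring.
have hmu : mu * sqnorm (y - x) <= dot (grad h y - grad h x) (y - x).
  have sxy : sqnorm (x - y) = sqnorm (y - x) by rewrite -sqnormN opprB.
  by rewrite e; rewrite sxy in h1; lra.
have s0 : 0 < L^-1 by rewrite invr_gt0.
have hL := dot_le_amgm (grad h y - grad h x) (y - x) s0.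
have hs := smooth_sq y x sm.
have h3 : L^-1 / 2 * sqnorm (grad h y - grad h x) <= L^-1 / 2 * (L ^+ 2 * sqnorm (y - x)).
  by apply: ler_wpM2l => //; rewrite divr_ge0 // ltW.
have e2 : L^-1 / 2 * (L ^+ 2 * sqnorm (y - x)) = L / 2 * sqnorm (y - x).
  by field; rewrite gt_eqF.
rewrite invrK in hL.
have : mu * sqnorm (y - x) <= L * sqnorm (y - x) by lra.
by rewrite ler_pM2r.
Qed.

Lemma trivial_d0 (R : realType) (C Rc N T : nat) (f : 'I_(C * Rc) -> 'I_N -> 'rV[R]_0 -> R)
  (mu gamma eta theta : R) (x0 xs : 'rV[R]_0) (O : finType) (ed : O -> 'I_T -> epoch_data C Rc N) :
  0 < mu -> rr_cli_bound f gamma eta theta ed mu x0 xs.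
Proof.
move=> mu0; rewrite /rr_cli_bound.
have z (u : 'rV[R]_0) : sqnorm u = 0 by rewrite /sqnorm /dot big_ord0.
rewrite z mulr0 add0r /Exp big1 ?mulr0; last by move=> w _; rewrite z.
apply: mulr_ge0; last exact: bigmax_ge0.
by apply: divr_ge0; [apply: mulr_ge0 => //; apply: sqr_ge0 | exact: ltW].
Qed.

Unset Implicit Arguments.

Theorem theorem1 (R : realType) (d C Rc N T : nat)
  (f : 'I_(C * Rc) -> 'I_N -> 'rV[R]_d -> R)
  (L mu gamma : R) (x0 xs : 'rV[R]_d) :
  (0 < C)%N -> (0 < Rc)%N -> (0 < N)%N -> (1 <= T)%N ->
  (forall m j x, differentiable (f m j) x) ->
  0 < mu ->
  (forall m j, strongly_convex mu (f m j)) ->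
  (forall m j, L_smooth L (f m j)) ->
  (forall x, favg f xs <= favg f x) ->
  0 < gamma -> gamma <= L^-1 ->
  let eta := gamma * N%:R in
  let theta := eta * Rc%:R in
  rr_cli_bound f gamma eta theta (@ed_resample C Rc N T) mu x0 xs /\
  rr_cli_bound f gamma eta theta (@ed_once C Rc N T) mu x0 xs.
Proof.
move=> C0 R0 N0 T1 dh mu0 sc sm fmin g0 gL eta theta.
have L0 : 0 < L by rewrite -invr_gt0 (lt_le_trans g0 gL).
have G0 := grad_sum_zero C0 R0 N0 dh sm L0 fmin.
case: (posnP d) => [d0 | dpos].
  by subst d; split; apply: trivial_d0.
have M0 : (0 < C * Rc)%N by rewrite muln_gt0 C0 R0.
have muL : mu <= L := mu_le_L dpos L0 (sc (Ordinal M0) (Ordinal N0)) (sm (Ordinal M0) (Ordinal N0)).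
have q0 : 0 <= 1 - gamma * mu.
  rewrite subr_ge0; apply: le_trans (_ : gamma * L <= 1).
    by apply: ler_wpM2l => //; exact: ltW.
  apply: le_trans (ler_wpM2r (ltW L0) gL) _; by rewrite mulVf ?gt_eqF.
split.
  exact: (final_bound x0 (@ed_resample C Rc N T) C0 R0 N0 dh mu0 sc sm L0 g0 gL G0 q0).
exact: (final_bound x0 (@ed_once C Rc N T) C0 R0 N0 dh mu0 sc sm L0 g0 gL G0 q0).
Qed.
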